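(* For any election $(V,C,\sigma)$ and candidate $a\in C$, if the integral domination graph $G(a)$ admits a perfect matching, then $\mathrm{plu}(a)\ge\mathrm{veto}(a)$.
   Context: An election: finite nonempty voter set $V$, finite candidate set $C$, a profile of linear orders $\sigma_i$ over $C$; $a\succeq_i c$ means $a=c$ or $i$ ranks $a$ above $c$; $\mathrm{top}(i)$ is $i$'s first choice. $\mathrm{plu}(a)$ is the number of voters ranking $a$ first and $\mathrm{veto}(a)$ the number of voters ranking $a$ last. The integral domination graph $G(a)$ is the bipartite graph with both sides copies of $V$ and edge $(i,j)$ iff $a\succeq_i\mathrm{top}(j)$. *)

(* Defs.v *)
From mathcomp Require Import all_boot.
Set Implicit Arguments. Unset Strict Implicit. Unset Printing Implicit Defensive.

(* The linear order sigma_i of voter i is encoded by an injective rank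
   function  rk i : C -> 'I_#|C|  (position 0 = first choice);
   injectivity into 'I_#|C| makes it a bijection, i.e. a linear order. *)
Definition profile (V C : finType) := V -> C -> 'I_#|C|.

Definition is_profile (V C : finType) (rk : profile V C) : Prop :=
  forall i : V, injective (rk i).

Definition prefeq (V C : finType) (rk : profile V C) (i : V) (a c : C) : bool :=
  (rk i a <= rk i c)%N.

Definition is_top (V C : finType) (rk : profile V C) (i : V) (c : C) : bool :=
  [forall d, prefeq rk i c d].

Definition is_last (V C : finType) (rk : profile V C) (i : V) (c : C) : bool :=
  [forall d, prefeq rk i d c].

Definition plu (V C : finType) (rk : profile V C) (a : C) : nat :=
  #|[set i : V | is_top rk i a]|.

Definition veto (V C : finType) (rk : profile V C) (a : C) : nat :=
  #|[set i : V | is_last rk i a]|.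

Definition dom_edge (V C : finType) (rk : profile V C) (a : C) (i j : V) : bool :=
  [forall t, is_top rk j t ==> prefeq rk i a t].

(* Perfect matching of the bipartite graph G(a) (both sides copies of V):
   a bijection f from the left copy to the right copy using only edges. *)
Definition has_perfect_matching (V C : finType) (rk : profile V C) (a : C) : Prop :=
  exists f : V -> V, bijective f /\ forall i : V, dom_edge rk a i (f i).

(* Main.v *)
Require Import Defs.
From mathcomp Require Import all_boot.

Theorem lemma6 (V C : finType) (rk : profile V C) (a : C) :
  0 < #|V| -> is_profile rk ->
  has_perfect_matching rk a -> veto rk a <= plu rk a.
Proof.
move=> _ Hinj [f [fbij Hf]].
have finj : injective f by apply: bij_inj.
rewrite /veto /plu -(card_imset _ finj).
apply: subset_leq_card; apply/subsetP => j /imsetP [i].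
rewrite !inE => Hlast ->.
have [t _ Ht] : exists2 t, true & forall d, (rk (f i) t <= rk (f i) d)%N.
  case: (arg_minnP (fun t => nat_of_ord (rk (f i) t)) (isT : predT a)) => t _ H.
  by exists t => // d; apply: H.
have Htop : is_top rk (f i) t by apply/forallP => d; exact: Ht.
have := Hf i; move/forallP/(_ t); rewrite Htop /= /prefeq => Hat.
have Hta : (rk i t <= rk i a)%N by move/forallP: Hlast => /(_ t).
have Heq : rk i a = rk i t by apply/val_inj/eqP; rewrite /= eqn_leq Hat Hta.
by rewrite (Hinj i _ _ Heq).
Qed.
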